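(* Let $a>0$, $\beta>0$, let $\lambda$ be feasible, let $0<\xi<a$, and let $0<C_L<1$. Then there exists $0<\delta_L(\beta,\lambda,\xi/a,C_L)\le\delta_\mu(\beta,\lambda)$ such that for every $0<\delta\le\delta_L$ and every $k\ge k_0(\delta)$ we have $L\ge C_L$, where \[ L=\left(1-\mathrm{e}^{-2k\xi}\right)+\frac{\lambda^2\delta^{2\beta}+4}{(2\delta+\lambda\delta^{\beta})^2}\,\mathrm{e}^{-4ka}\left(\mathrm{e}^{2k\xi}-1\right). \]
   Context: For $0<\delta<1$ and constants $\beta>0$, $\lambda\in\mathbb{R}$, put $\mu=\delta+\lambda\delta^{\beta}$. The constant $\lambda$ is called feasible if $\lambda>0$ when $0<\beta<1$, $\lambda\ge -1$ when $\beta=1$, and $\lambda\neq 0$ when $\beta>1$. For feasible $\lambda$, $\delta_\mu=\delta_\mu(\beta,\lambda)\in(0,1)$ denotes a number such that $\mu\ge 0$ for all $0<\delta\le\delta_\mu$. Define \[ k_0(\delta)=\frac{1}{2a}\ln\!\left(\frac{1}{2\delta^2+\lambda\delta^{\beta+1}}\right). \] *)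

(* Defs.v *)
From Stdlib Require Import Reals.
Open Scope R_scope.

Definition feasible (beta lam : R) : Prop :=
  (0 < beta < 1 /\ lam > 0) \/ (beta = 1 /\ lam >= -1) \/ (beta > 1 /\ lam <> 0).

Definition mu (beta lam d : R) : R := d + lam * Rpower d beta.

Definition is_delta_mu (beta lam dm : R) : Prop :=
  0 < dm < 1 /\ forall d, 0 < d <= dm -> 0 <= mu beta lam d.

Definition k0 (a beta lam d : R) : R :=
  / (2 * a) * ln (/ (2 * d ^ 2 + lam * Rpower d (beta + 1))).

Definition Lfun (a xi beta lam d k : R) : R :=
  (1 - exp (- (2 * k * xi)))
  + (lam ^ 2 * Rpower d (2 * beta) + 4) / (2 * d + lam * Rpower d beta) ^ 2
    * exp (- (4 * k * a)) * (exp (2 * k * xi) - 1).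

(* Main.v *)
Require Import Defs.
From Stdlib Require Import Reals Lra.
Open Scope R_scope.

Theorem lemma4p2 :
  forall (beta lam dm CL r : R),
    0 < beta -> feasible beta lam -> is_delta_mu beta lam dm ->
    0 < CL < 1 -> 0 < r < 1 ->
    exists dL : R, 0 < dL <= dm /\
      forall (a xi : R), 0 < a -> 0 < xi < a -> xi / a = r ->
      forall d k : R, 0 < d <= dL -> k >= k0 a beta lam d ->
        Lfun a xi beta lam d k >= CL.
Proof.
  intros beta lam dm CL r Hb _ [[Hdm0 Hdm1] Hmu] [HC0 HC1] [Hr0 Hr1].
  set (c := exp (ln (1 - CL) / r)).
  assert (Hc0 : 0 < c) by apply exp_pos.
  assert (Hl : ln (1 - CL) < 0).
  { rewrite <- ln_1. apply ln_increasing; lra. }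
  assert (Hc1 : ln c < 0).
  { unfold c; rewrite ln_exp. unfold Rdiv.
    assert (0 < / r) by (apply Rinv_0_lt_compat; lra). nra. }
  assert (Habs : 0 <= Rabs lam) by apply Rabs_pos.
  set (dL := Rmin dm (c / (2 + Rabs lam))).
  assert (HcL : 0 < c / (2 + Rabs lam)) by (apply Rdiv_lt_0_compat; lra).
  exists dL. split.
  { split. unfold dL; apply Rmin_glb_lt; lra. apply Rmin_l. }
  intros a xi Ha [Hxi0 Hxia] Hxr d k [Hd0 HdL] Hk.
  assert (Hxi : xi = r * a) by (rewrite <- Hxr; field; lra).
  assert (Hddm : d <= dm) by (eapply Rle_trans; [exact HdL| apply Rmin_l]).
  assert (Hdc : d <= c / (2 + Rabs lam)) by (eapply Rle_trans; [exact HdL| apply Rmin_r]).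
  assert (Hd1 : d < 1) by lra.
  pose proof (Hmu d (conj Hd0 Hddm)) as Hm. unfold mu in Hm.
  assert (Hpb : 0 < Rpower d beta) by (unfold Rpower; apply exp_pos).
  assert (Hlnd : ln d < 0) by (rewrite <- ln_1; apply ln_increasing; lra).
  assert (Hpb1 : Rpower d beta <= 1).
  { unfold Rpower. rewrite <- exp_0. apply Rlt_le, exp_increasing. nra. }
  assert (HP : Rpower d (beta + 1) = Rpower d beta * d)
    by (rewrite Rpower_plus, Rpower_1; lra).
  set (M := 2 * d ^ 2 + lam * Rpower d (beta + 1)).
  assert (HM : M = d * (2 * d + lam * Rpower d beta)) by (unfold M; rewrite HP; ring).
  assert (HM0 : 0 < M) by (rewrite HM; nra).
  assert (Hlp : lam * Rpower d beta <= Rabs lam).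
  { assert (lam <= Rabs lam) by apply Rle_abs. nra. }
  assert (HMc : M <= c).
  { rewrite HM. assert (d * (2 + Rabs lam) <= c).
    { apply (Rmult_le_compat_r (2 + Rabs lam)) in Hdc; [|lra].
      unfold Rdiv in Hdc. rewrite Rmult_assoc, Rinv_l in Hdc; lra. }
    nra. }
  assert (HlnM : ln M <= ln c).
  { destruct (Req_dec M c) as [->|]; [lra|]. apply Rlt_le, ln_increasing; lra. }
  unfold k0 in Hk. fold M in Hk. rewrite ln_Rinv in Hk by lra.
  assert (Hk2 : 2 * a * k >= - ln M).
  { apply (Rmult_ge_compat_l (2 * a)) in Hk; [|lra].
    rewrite <- Rmult_assoc, Rinv_r in Hk; lra. }
  assert (Hlc : r * ln c = ln (1 - CL)) by (unfold c; rewrite ln_exp; field; lra).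
  assert (Hexp : - (2 * k * xi) <= ln (1 - CL)).
  { rewrite Hxi, <- Hlc. nra. }
  assert (He1 : exp (- (2 * k * xi)) <= 1 - CL).
  { rewrite <- (exp_ln (1 - CL)) by lra.
    destruct (Req_dec (- (2 * k * xi)) (ln (1 - CL))) as [->|]; [lra|].
    apply Rlt_le, exp_increasing; lra. }
  assert (Hk0 : 0 <= k) by nra.
  assert (Ht : 1 <= exp (2 * k * xi)).
  { rewrite <- exp_0. destruct (Req_dec (2 * k * xi) 0) as [->|]; [lra|].
    apply Rlt_le, exp_increasing; nra. }
  assert (HA : 0 <= (lam ^ 2 * Rpower d (2 * beta) + 4) / (2 * d + lam * Rpower d beta) ^ 2).
  { assert (0 < Rpower d (2 * beta)) by (unfold Rpower; apply exp_pos).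
    apply Rlt_le, Rdiv_lt_0_compat; [nra|]. apply pow_lt; nra. }
  unfold Lfun.
  assert (0 < exp (- (4 * k * a))) by apply exp_pos.
  assert (0 <= (lam ^ 2 * Rpower d (2 * beta) + 4) / (2 * d + lam * Rpower d beta) ^ 2
    * exp (- (4 * k * a)) * (exp (2 * k * xi) - 1)).
  { apply Rmult_le_pos; [|lra]. apply Rmult_le_pos; lra. }
  lra.
Qed.
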